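(* Let $f:\mathbb{R}^d\to\mathbb{R}$ be twice differentiable with $f^*:=\sup_\theta f(\theta)$ and $f(\theta)<f^*$ for all $\theta$. Suppose (i) $f$ is $L_1$ non-uniform smooth and (ii) $f$ satisfies the reversed Łojasiewicz inequality $\|\nabla f(\theta)\|_2\le\nu[f^*-f(\theta)]$ for all $\theta$, with $\nu>0$. Then $\theta\mapsto\ln(f^*-f(\theta))$ is $L_1\nu$-smooth.
   Context: $f$ is $L_1$ non-uniform smooth: $|f(\theta)-f(\theta')-\langle\nabla f(\theta'),\theta-\theta'\rangle|\le\frac{L_1\|\nabla f(\theta')\|_2}{2}\|\theta-\theta'\|_2^2$ for all $\theta,\theta'$. A function $g$ is $M$-smooth if $\nabla^2 g(\theta)\preceq M I$ for all $\theta$ (equivalently, here, the one-sided quadratic upper bound $g(\theta')\le g(\theta)+\langle\nabla g(\theta),\theta'-\theta\rangle+\frac M2\|\theta'-\theta\|_2^2$). *)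

(* Defs.v *)
From HB Require Import structures.
From mathcomp Require Import all_boot all_order all_algebra.
From mathcomp Require Import all_classical all_reals all_analysis.
Set Implicit Arguments. Unset Strict Implicit. Unset Printing Implicit Defensive.
Import Order.TTheory GRing.Theory Num.Theory.
Import numFieldNormedType.Exports.
Local Open Scope ring_scope.

Section Defs.
Variables (R : realType) (d : nat).
Notation V := 'rV[R]_d.

(* Euclidean inner product and 2-norm on R^d (the library norm on matrices is the sup norm). *)
Definition dotp (u v : V) : R := \sum_(i < d) u 0 i * v 0 i.
Definition norm2 (u : V) : R := Num.sqrt (dotp u u).

Definition e_ (i : 'I_d) : V := delta_mx 0 i.

Definition partial (f : V -> R) (i : 'I_d) (x : V) : R := 'D_(e_ i) f x.
Definition grad (f : V -> R) (x : V) : V := \row_(i < d) partial f i x.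

Definition twice_differentiable (f : V -> R) : Prop :=
  (forall x, differentiable f x) /\
  (forall (i : 'I_d) x, differentiable (partial f i) x).

Definition hessian (f : V -> R) (x : V) : 'M[R]_d :=
  \matrix_(i < d, j < d) 'D_(e_ j) (partial f i) x.

Definition nonuniform_smooth (L1 : R) (f : V -> R) : Prop :=
  forall th th' : V,
    `| f th - f th' - dotp (grad f th') (th - th') |
      <= L1 * norm2 (grad f th') / 2 * norm2 (th - th') ^+ 2.

(* M-smooth: Hessian exists and  hessian g x <= M I  in the Loewner order,
   i.e.  v^T (hessian g x) v <= M * v^T v  for all v. *)
Definition M_smooth (M : R) (g : V -> R) : Prop :=
  twice_differentiable g /\
  forall (x v : V), (v *m hessian g x *m v^T) 0 0 <= M * dotp v v.

End Defs.

(* Main.v *)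
Require Import Defs.
From HB Require Import structures.
From mathcomp Require Import all_boot all_order all_algebra.
From mathcomp Require Import all_classical all_reals all_analysis.
From mathcomp Require Import ring lra.
Import Order.TTheory GRing.Theory Num.Theory.
Import numFieldNormedType.Exports.
Local Open Scope classical_set_scope.
Local Open Scope ring_scope.

Section S.
Variables (R : realType) (d : nat).
Notation V := 'rV[R]_d.
Local Notation ee := (e_ R).

Lemma Dlin (h : V -> R) x v : differentiable h x ->
  'D_v h x = \sum_(i < d) v 0 i * 'D_(ee i) h x.
Proof.
move=> dh; rewrite deriveE //.
under eq_bigr do rewrite deriveE //.
rewrite {1}(row_sum_delta v) linear_sum; apply: eq_bigr => i _.
by rewrite linearZ.
Qed.

Lemma Dln (h : V -> R) y v : differentiable h y -> 0 < h y ->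
  differentiable (@ln R \o h) y /\ 'D_v (@ln R \o h) y = 'D_v h y / h y.
Proof.
move=> dh hy.
have dl : differentiable (@ln R) (h y).
  apply/derivable1_diffP. have H := is_derive1_ln hy. exact: (@ex_derive _ _ _ _ _ _ _ H).
have dc : differentiable (@ln R \o h) y by apply: differentiable_comp.
split => //.
rewrite deriveE // diff_comp //= (deriveE _ dh).
rewrite deriv1E; last exact/derivable1_diffP.
rewrite /= derive1E (@derive_val _ _ _ _ _ _ _ (is_derive1_ln hy)).
by [].
Qed.

Lemma DF (f : V -> R) (c : R) y v : differentiable f y ->
  differentiable (fun z => c - f z) y /\ 'D_v (fun z => c - f z) y = - 'D_v f y.
Proof.
move=> df.
have -> : (fun z => c - f z) = cst c - f by [].
split; first by apply: differentiableB.
rewrite deriveB //; last exact: diff_derivable.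
by rewrite derive_cst sub0r.
Qed.

Lemma partial_g (f : V -> R) c i y : differentiable f y -> 0 < c - f y ->
  partial (fun th => ln (c - f th)) i y = - partial f i y / (c - f y).
Proof.
move=> df hy.
have [dF DFe] := @DF f c y (ee i) df.
have [_ E] := @Dln _ y (ee i) dF hy.
rewrite /partial; apply: etrans E _.
by rewrite DFe.
Qed.

Lemma hess_g (f : V -> R) c x i j : (forall y, differentiable f y) ->
  (forall y, 0 < c - f y) -> (forall i y, differentiable (partial f i) y) ->
  hessian (fun th => ln (c - f th)) x i j =
  - (partial f i x * partial f j x) / (c - f x)^+2 - hessian f x i j / (c - f x).
Proof.
move=> df hpos dp.
rewrite !mxE.
have -> : partial (fun th => ln (c - f th)) i =
   (fun y => - partial f i y) * (fun y => (c - f y)^-1).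
  by apply/funext => y; rewrite partial_g.
have [dF DFe] := @DF f c x (ee j) (df x).
have Fn0 : c - f x != 0 by rewrite gt_eqF.
rewrite deriveM; last first.
  apply: derivableV => //; exact: diff_derivable.
  have -> : (fun y => - partial f i y) = - partial f i by [].
  by apply: derivableN; exact: diff_derivable.
rewrite deriveV //; last exact: diff_derivable.
have -> : (fun y => - partial f i y) = - partial f i by [].
rewrite deriveN; last exact: diff_derivable.
rewrite DFe /=.
rewrite /GRing.scale /=.
rewrite -/(partial f j x).
field.
exact: Fn0.
Qed.

Lemma dotpBl (u w z : V) : dotp (u - w) z = dotp u z - dotp w z.
Proof.
rewrite /dotp -sumrB; apply: eq_bigr => i _; rewrite !mxE; ring.
Qed.

Lemma dotpZr (u w : V) k : dotp u (k *: w) = k * dotp u w.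
Proof.
rewrite /dotp mulr_sumr; apply: eq_bigr => i _; rewrite !mxE; ring.
Qed.

Lemma dotpZl (u w : V) k : dotp (k *: u) w = k * dotp u w.
Proof.
rewrite /dotp mulr_sumr; apply: eq_bigr => i _; rewrite !mxE; ring.
Qed.

Lemma dotpNN (u w : V) : dotp (- u) (- w) = dotp u w.
Proof. rewrite /dotp; apply: eq_bigr => i _; rewrite !mxE; ring. Qed.

Lemma dotpNr (u w : V) : dotp u (- w) = - dotp u w.
Proof.
rewrite /dotp -sumrN; apply: eq_bigr => i _; rewrite !mxE; ring.
Qed.

Lemma dotp_ge0 (u : V) : 0 <= dotp u u.
Proof. rewrite /dotp; apply: sumr_ge0 => i _; by rewrite -expr2 sqr_ge0. Qed.

Lemma norm2_sq (u : V) : norm2 u ^+ 2 = dotp u u.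
Proof. by rewrite /norm2 sqr_sqrtr // dotp_ge0. Qed.

Lemma two_point (f : V -> R) L1 (hs : nonuniform_smooth L1 f) x y :
  - ((L1 * norm2 (grad f x) + L1 * norm2 (grad f y)) / 2 * dotp (y - x) (y - x))
  <= dotp (grad f y - grad f x) (y - x).
Proof.
have h1 := hs y x; have h2 := hs x y.
rewrite norm2_sq in h1; rewrite norm2_sq in h2.
rewrite -(opprB y x) dotpNN dotpNr in h2.
rewrite [dotp (grad f y - _) _]dotpBl.
move: h1 h2; rewrite !ler_norml => /andP[h1 h1'] /andP[h2 h2'].
lra.
Qed.

Lemma key (f : V -> R) L1 (hs : nonuniform_smooth L1 f)
  (df : forall y, differentiable f y)
  (dp : forall i y, differentiable (partial f i) y) x v :
  - (L1 * norm2 (grad f x) * dotp v v) <=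
  \sum_(j < d) v 0 j * \sum_(i < d) v 0 i * hessian f x i j.
Proof.
pose P := \sum_(i < d) (v 0 i *: partial f i).
have dP : forall y, differentiable P y.
  move=> y; apply: differentiable_sum => i; exact: differentiableZ.
have PE : forall y, P y = \sum_(i < d) v 0 i * partial f i y.
  by move=> y; rewrite /P fct_sumE.
have DPe : 'D_v P x = \sum_(j < d) v 0 j * \sum_(i < d) v 0 i * hessian f x i j.
  rewrite Dlin //; apply: eq_bigr => j _; congr (_ * _).
  rewrite derive_sum; last by move=> i; apply: diff_derivable; exact: differentiableZ.
  apply: eq_bigr => i _; rewrite deriveZ; last exact: diff_derivable.
  by rewrite mxE.
have cvgq : (fun t : R => t^-1 *: ((P \o shift x) (t *: v) - P x)) @ 0^' --> 'D_v P x.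
  have := @diff_derivable _ _ _ P x v (dP x). rewrite /derivable. exact.
pose phi := fun t : R => norm2 (grad f (t *: v + x)).
pose N2 := \sum_(i < d) (partial f i * partial f i).
have phiE : phi = Num.sqrt \o (N2 \o (fun t : R => t *: v + x)).
  apply/funext => t; rewrite /phi /norm2 /= /N2 fct_sumE /dotp.
  by congr Num.sqrt; apply: eq_bigr => i _; rewrite !mxE.
have dl : differentiable (fun t : R => t *: v + x) 0 by [].
have cphi : {for 0, continuous phi}.
  rewrite phiE; apply: continuous_comp; last exact: sqrt_continuous.
  apply: differentiable_continuous; apply: differentiable_comp => //.
  apply: differentiable_sum => i; exact: differentiableM.
set Cx := L1 * norm2 (grad f x).
have cvgLB : (fun t => - (L1 / 2 * dotp v v) * phi t) @ 0^' -->
   - (L1 / 2 * dotp v v) * phi 0.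
  by apply: cvgMl_tmp; apply/continuous_withinNx.
have cvgR : (fun t : R => t^-1 *: ((P \o shift x) (t *: v) - P x) + Cx / 2 * dotp v v)
   @ 0^' --> 'D_v P x + Cx / 2 * dotp v v.
  by apply: cvgD => //; exact: cvg_cst.
have := ler_cvg_to cvgLB cvgR.
have -> : phi 0 = norm2 (grad f x) by rewrite /phi scale0r add0r.
rewrite -DPe => H.
suff : - (L1 / 2 * dotp v v) * norm2 (grad f x) <= 'D_v P x + Cx / 2 * dotp v v.
  rewrite /Cx; lra.
apply: H.
near=> t.
have t0 : t != 0 by near: t; exact: nbhs_dnbhs_neq.
have tp := two_point f L1 hs x (t *: v + x).
rewrite addrK dotpZr dotpZr dotpZl in tp.
have PD : P (t *: v + x) - P x = dotp (grad f (t *: v + x) - grad f x) v.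
  by rewrite !PE /dotp -sumrB; apply: eq_bigr => i _; rewrite !mxE; ring.
rewrite /= PD.
set G := dotp (grad f (t *: v + x) - grad f x) v in tp *.
set A := L1 * norm2 (grad f x) in tp *.
set B := L1 * norm2 (grad f (t *: v + x)) in tp *.
have tt : 0 <= t^-1 * t^-1 by rewrite -expr2 sqr_ge0.
have tp' := ler_wpM2r tt tp.
have e2 : t * G * (t^-1 * t^-1) = t^-1 * G by field.
have e3 : - ((A + B) / 2 * (t * (t * dotp v v))) * (t^-1 * t^-1) =
   - ((A + B) / 2 * dotp v v) by field.
rewrite e2 e3 in tp'.
rewrite /GRing.scale /= /phi -/B /Cx -/A.
rewrite /B in tp'; lra.
Unshelve. all: by end_near.
Qed.

Lemma dotp_eq0 (u : V) : dotp u u = 0 -> u = 0.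
Proof.
have pos : forall i : 'I_d, true -> 0 <= u 0 i * u 0 i.
  by move=> i _; rewrite -expr2 sqr_ge0.
move=> h; have H := psumr_eq0P pos h. apply/rowP => i; rewrite mxE; have /eqP := H i isT.
by rewrite mulf_eq0 orbb => /eqP.
Qed.

Lemma dotp0l (w : V) : dotp 0 w = 0.
Proof. by rewrite /dotp big1 // => i _; rewrite mxE mul0r. Qed.

Lemma const_of_neg (f : V -> R) L1 (hs : nonuniform_smooth L1 f) :
  L1 < 0 -> forall th th', f th = f th'.
Proof.
move=> L0 th th'; have h := hs th th'.
have hN : 0 <= norm2 (grad f th') by apply: sqrtr_ge0.
have hn : 0 <= norm2 (th - th') ^+ 2 by apply: sqr_ge0.
have hNn : 0 <= norm2 (grad f th') * norm2 (th - th') ^+ 2 by apply: mulr_ge0.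
have hX := normr_ge0 (f th - f th' - dotp (grad f th') (th - th')).
have : norm2 (grad f th') * norm2 (th - th') ^+ 2 = 0 by nra.
move/eqP; rewrite mulf_eq0 => /orP[] /eqP h0.
  have g0 : grad f th' = 0.
    by apply: dotp_eq0; rewrite -norm2_sq h0 expr0n.
  move: h; rewrite h0 mulr0 !mul0r g0 dotp0l subr0 normr_le0 subr_eq0.
  by move/eqP.
have : th - th' = 0 by apply: dotp_eq0; rewrite -norm2_sq.
by move/eqP; rewrite subr_eq0 => /eqP ->.
Qed.

Lemma qform (M : 'M[R]_d) (v : V) :
  (v *m M *m v^T) 0 0 = \sum_(j < d) v 0 j * \sum_(i < d) v 0 i * M i j.
Proof.
rewrite !mxE; apply: eq_bigr => j _; rewrite !mxE mulrC; congr (_ * _) => //.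
Qed.

Lemma qsplit (a : 'I_d -> R) (H : 'I_d -> 'I_d -> R) c e (v : V) :
  \sum_(j < d) v 0 j * \sum_(i < d) v 0 i * (- (a i * a j) * c - H i j * e) =
  - (\sum_(i < d) v 0 i * a i) ^+ 2 * c - (\sum_(j < d) v 0 j * \sum_(i < d) v 0 i * H i j) * e.
Proof.
transitivity (\sum_(j < d) \sum_(i < d)
   ((- (v 0 j * a j * (v 0 i * a i))) * c - (v 0 j * (v 0 i * H i j)) * e)).
  by apply: eq_bigr => j _; rewrite mulr_sumr; apply: eq_bigr => i _; ring.
rewrite (eq_bigr (fun j => \sum_(i < d) (- (v 0 j * a j * (v 0 i * a i))) * c
   - \sum_(i < d) (v 0 j * (v 0 i * H i j)) * e)); last by move=> j _; rewrite sumrB.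
rewrite sumrB; congr (_ - _); symmetry.
  rewrite expr2 mulr_suml -sumrN mulr_suml; apply: eq_bigr => j _.
  rewrite mulr_sumr -sumrN mulr_suml; apply: eq_bigr => i _; ring.
rewrite mulr_suml; apply: eq_bigr => j _.
rewrite mulr_sumr mulr_suml; apply: eq_bigr => i _; ring.
Qed.
End S.

Theorem lemma1 (R : realType) (d : nat) (f : 'rV[R]_d -> R) (fstar L1 nu : R)
  (hf2 : twice_differentiable f)
  (hsup : fstar = sup (range f))
  (hlt : forall th, f th < fstar)
  (hsmooth : nonuniform_smooth L1 f)
  (hnu : 0 < nu)
  (hloj : forall th, norm2 (grad f th) <= nu * (fstar - f th)) :
  M_smooth (L1 * nu) (fun th => ln (fstar - f th)).
Proof.
have Fpos : forall y, 0 < fstar - f y by move=> y; rewrite subr_gt0.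
have [df dp] := hf2.
have pgE : forall i, partial (fun th => ln (fstar - f th)) i =
    (fun y => - partial f i y) * (fun y => (fstar - f y)^-1).
  by move=> i; apply/funext => y; rewrite partial_g.
split.
  split.
    move=> y; have [dF _] := @DF _ _ f fstar y 0 (df y).
    exact: (@Dln _ _ _ y 0 dF (Fpos y)).1.
  move=> i y; rewrite pgE; apply: differentiableM.
    have -> : (fun y => - partial f i y) = - partial f i by [].
    exact: differentiableN.
  apply: differentiableV; last by rewrite gt_eqF.
  exact: (@DF _ _ f fstar y 0 (df y)).1.
move=> x v.
rewrite qform.
under eq_bigr do under eq_bigr do rewrite hess_g //.
rewrite (@qsplit _ _ (fun i => partial f i x) (hessian f x)).
have hk := @key _ _ f L1 hsmooth df dp x v.
case: (ltrP L1 0) => hL.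
  exfalso; have hc := @const_of_neg _ _ f L1 hsmooth hL.
  have rE : range f = [set f 0].
    apply/seteqP; split => z /=; first by case=> y _ <-; apply: hc.
    by move=> ->; exists 0.
  by have := hlt 0; rewrite hsup rE sup1 ltxx.
set S := \sum_(i < d) _.
set Q := \sum_(j < d) _.
set N := norm2 (grad f x).
have e0 : 0 < (fstar - f x)^-1 by rewrite invr_gt0.
have h1 := ler_wpM2r (ltW e0) hk.
have h2 := ler_wpM2r (ltW e0) (hloj x).
rewrite -mulrA mulfV ?gt_eqF // mulr1 in h2.
have h4 := ler_wpM2l (mulr_ge0 hL (@dotp_ge0 _ _ v)) h2.
have h3 : 0 <= S ^+ 2 * ((fstar - f x) ^+ 2)^-1.
  by apply: mulr_ge0; [exact: sqr_ge0 | rewrite invr_ge0 sqr_ge0].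
rewrite -/N in h4.
move: h1 h3 h4; rewrite -/Q -/N.
set a := (fstar - f x)^-1; set b := ((fstar - f x) ^+ 2)^-1 => h1 h3 h4.
clearbody S Q N a b.
lra.
Qed.
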